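(* Let $\mathcal{D}$ be a triangulated category with small coproducts and let $T_1,T_2$ be exceptional objects of $\mathcal{D}$ such that (A1) $\operatorname{Hom}_{\mathcal{D}}(T_1,T_2[k])=0$ for all $k\in\mathbb{Z}$ and (A2) $\operatorname{Hom}_{\mathcal{D}}(T_2,T_1[k])=0$ for all $k\in\mathbb{Z}\setminus\{0,1\}$. Let $\alpha:T_2\to T_1[1]$ be any morphism and $T_1\to T\xrightarrow{\gamma}T_2\xrightarrow{\alpha}T_1[1]$ a triangle. Then $T$ is exceptional if and only if the map $\operatorname{End}_{\mathcal{D}}(T_2)\oplus\operatorname{End}_{\mathcal{D}}(T_1)\to\operatorname{Hom}_{\mathcal{D}}(T_2,T_1[1])$, $(f,g)\mapsto\alpha\circ f+g[1]\circ\alpha$, is surjective.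
   Context: An object $T$ is exceptional if $\operatorname{Hom}_{\mathcal{D}}(T,T[k])=0$ for all nonzero integers $k$; $[1]$ is the shift functor. *)

(* Defs.v *)
From HB Require Import structures.
From mathcomp Require Import all_boot all_order all_algebra.
Set Implicit Arguments. Unset Strict Implicit. Unset Printing Implicit Defensive.
Import GRing.Theory.
Local Open Scope ring_scope.

Record TriCat := {
  Obj :> Type;
  Mor : Obj -> Obj -> zmodType;
  tcomp : forall X Y Z : Obj, Mor Y Z -> Mor X Y -> Mor X Z;
  idm : forall X : Obj, Mor X X;
  tcompA : forall X Y Z W (h : Mor Z W) (g : Mor Y Z) (f : Mor X Y),
      tcomp h (tcomp g f) = tcomp (tcomp h g) f;
  comp1m : forall X Y (f : Mor X Y), tcomp (idm Y) f = f;
  compm1 : forall X Y (f : Mor X Y), tcomp f (idm X) = f;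
  compDl : forall X Y Z (g g' : Mor Y Z) (f : Mor X Y),
      tcomp (g + g') f = tcomp g f + tcomp g' f;
  compDr : forall X Y Z (g : Mor Y Z) (f f' : Mor X Y),
      tcomp g (f + f') = tcomp g f + tcomp g f';
  zobj : Obj;
  zobj_from : forall X (f : Mor zobj X), f = 0;
  zobj_to : forall X (f : Mor X zobj), f = 0;
  biprod : forall X Y : Obj, exists P : Obj, exists (i1 : Mor X P) (i2 : Mor Y P)
      (p1 : Mor P X) (p2 : Mor P Y),
      [/\ tcomp p1 i1 = idm X, tcomp p2 i2 = idm Y, tcomp p1 i2 = 0, tcomp p2 i1 = 0
        & tcomp i1 p1 + tcomp i2 p2 = idm P];
  shift : Obj -> Obj;
  shiftm : forall X Y, Mor X Y -> Mor (shift X) (shift Y);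
  shiftm1 : forall X, shiftm (idm X) = idm (shift X);
  shiftmM : forall X Y Z (g : Mor Y Z) (f : Mor X Y),
      shiftm (tcomp g f) = tcomp (shiftm g) (shiftm f);
  shiftmD : forall X Y (f g : Mor X Y), shiftm (f + g) = shiftm f + shiftm g;
  shiftm_bij : forall X Y, bijective (@shiftm X Y);
  shift_esurj : forall Y, exists X, exists (i : Mor (shift X) Y) (j : Mor Y (shift X)),
      tcomp i j = idm Y /\ tcomp j i = idm (shift X);
  dist : forall X Y Z, Mor X Y -> Mor Y Z -> Mor Z (shift X) -> Prop;
  dist_iso : forall X Y Z X' Y' Z' (f : Mor X Y) (g : Mor Y Z) (h : Mor Z (shift X))
      (f' : Mor X' Y') (g' : Mor Y' Z') (h' : Mor Z' (shift X'))
      (a : Mor X X') (b : Mor Y Y') (c : Mor Z Z')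
      (a' : Mor X' X) (b' : Mor Y' Y) (c' : Mor Z' Z),
      tcomp a' a = idm X -> tcomp a a' = idm X' ->
      tcomp b' b = idm Y -> tcomp b b' = idm Y' ->
      tcomp c' c = idm Z -> tcomp c c' = idm Z' ->
      tcomp b f = tcomp f' a -> tcomp c g = tcomp g' b ->
      tcomp (shiftm a) h = tcomp h' c ->
      dist f g h -> dist f' g' h';
  dist_id : forall X, dist (idm X) (0 : Mor X zobj) (0 : Mor zobj (shift X));
  dist_ex : forall X Y (f : Mor X Y), exists Z, exists (g : Mor Y Z) (h : Mor Z (shift X)),
      dist f g h;
  dist_rot : forall X Y Z (f : Mor X Y) (g : Mor Y Z) (h : Mor Z (shift X)),
      dist f g h -> dist g h (- shiftm f);
  dist_morph : forall X Y Z X' Y' Z' (f : Mor X Y) (g : Mor Y Z) (h : Mor Z (shift X))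
      (f' : Mor X' Y') (g' : Mor Y' Z') (h' : Mor Z' (shift X'))
      (a : Mor X X') (b : Mor Y Y'),
      dist f g h -> dist f' g' h' -> tcomp b f = tcomp f' a ->
      exists c : Mor Z Z', tcomp c g = tcomp g' b /\ tcomp (shiftm a) h = tcomp h' c;
  dist_oct : forall X Y Z Z' X' Y' (f : Mor X Y) (g : Mor Y Z)
      (f1 : Mor Y Z') (f2 : Mor Z' (shift X))
      (g1 : Mor Z X') (g2 : Mor X' (shift Y))
      (h1 : Mor Z Y') (h2 : Mor Y' (shift X)),
      dist f f1 f2 -> dist g g1 g2 -> dist (tcomp g f) h1 h2 ->
      exists (u : Mor Z' Y') (v : Mor Y' X'),
      [/\ dist u v (tcomp (shiftm f1) g2), tcomp u f1 = tcomp h1 g,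
          tcomp h2 u = f2, tcomp v h1 = g1 & tcomp g2 v = tcomp (shiftm f) h2]
}.

Arguments tcomp {_ _ _ _}.
Arguments idm {_}.
Arguments shift {_}.
Arguments shiftm {_ _ _}.
Arguments dist {_ _ _ _}.

Definition has_small_coproducts (D : TriCat) : Prop :=
  forall (I : Type) (F : I -> D), exists C : D, exists inj : forall i, Mor (F i) C,
    forall Y : D, bijective (fun u : Mor C Y => fun i => tcomp u (inj i)).

Definition shiftn (D : TriCat) (n : nat) (X : D) : D := iter n (@shift D) X.

(** "Mor(X, Y[k]) = 0" for k : int.  For k = -(n+1) < 0 we use the
    canonical identification Mor(X, Y[k]) ~ Mor(X[n+1], Y) (shift is an
    auto-equivalence). *)
Definition homZ_vanishes (D : TriCat) (X Y : D) (k : int) : Prop :=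
  match k with
  | Posz n => forall f : Mor X (shiftn n Y), f = 0
  | Negz n => forall f : Mor (shiftn n.+1 X) Y, f = 0
  end.

Definition exceptional (D : TriCat) (T : D) : Prop :=
  forall k : int, k != 0 -> homZ_vanishes T T k.

(* Main.v *)
Require Import Defs.
From HB Require Import structures.
From mathcomp Require Import all_boot all_order all_algebra.
Import GRing.Theory.
Local Open Scope ring_scope.
Set Implicit Arguments. Unset Strict Implicit.

Lemma tcomp0r (D : TriCat) (X Y Z : D) (g : Mor Y Z) : tcomp g (0 : Mor X Y) = 0.
Proof.
have H := compDr g (0 : Mor X Y) 0; rewrite addr0 in H.
by apply: (addrI (tcomp g 0)); rewrite -H addr0.
Qed.

Lemma tcomp0l (D : TriCat) (X Y Z : D) (f : Mor X Y) : tcomp (0 : Mor Y Z) f = 0.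
Proof.
have H := compDl (0 : Mor Y Z) 0 f; rewrite addr0 in H.
by apply: (addrI (tcomp 0 f)); rewrite -H addr0.
Qed.

Lemma tcompNr (D : TriCat) (X Y Z : D) (g : Mor Y Z) (f : Mor X Y) :
  tcomp g (- f) = - tcomp g f.
Proof. by apply: (addrI (tcomp g f)); rewrite -compDr !subrr tcomp0r. Qed.

Lemma tcompNl (D : TriCat) (X Y Z : D) (g : Mor Y Z) (f : Mor X Y) :
  tcomp (- g) f = - tcomp g f.
Proof. by apply: (addrI (tcomp g f)); rewrite -compDl !subrr tcomp0l. Qed.

Lemma shiftm0 (D : TriCat) (X Y : D) : shiftm (0 : Mor X Y) = 0.
Proof.
have H := shiftmD (0 : Mor X Y) 0; rewrite addr0 in H.
by apply: (addrI (shiftm (0 : Mor X Y))); rewrite -H addr0.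
Qed.

Lemma shiftmN (D : TriCat) (X Y : D) (f : Mor X Y) : shiftm (- f) = - shiftm f.
Proof. by apply: (addrI (shiftm f)); rewrite -shiftmD !subrr shiftm0. Qed.

Lemma shiftm_inj (D : TriCat) (X Y : D) : injective (@shiftm D X Y).
Proof. exact: bij_inj (shiftm_bij X Y). Qed.

Lemma shiftm_surj (D : TriCat) (X Y : D) (v : Mor (shift X) (shift Y)) :
  exists u, shiftm u = v.
Proof. case: (shiftm_bij X Y) => g _ Kg. by exists (g v). Qed.

Lemma dist_comp0 (D : TriCat) (X Y Z : D) (f : Mor X Y) (g : Mor Y Z)
  (h : Mor Z (shift X)) : dist f g h -> tcomp g f = 0.
Proof.
move=> H.
have [c [Hc _]] := dist_morph (dist_id X) H (a := idm X) (b := f) erefl.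
by rewrite -Hc tcomp0r.
Qed.

Lemma distL1 (D : TriCat) (X Y Z W : D) (f : Mor X Y) (g : Mor Y Z)
  (h : Mor Z (shift X)) (u : Mor W Y) :
  dist f g h -> tcomp g u = 0 -> exists v, tcomp f v = u.
Proof.
move=> H Hu.
have H1 := dist_rot (dist_id W).
have H2 := dist_rot H.
have [|c [_ Hc]] := dist_morph H1 H2 (a := u) (b := 0 : Mor (zobj D) Z).
  by rewrite tcomp0r Hu.
have [v Hv] := shiftm_surj c.
exists v; apply: shiftm_inj; rewrite shiftmM Hv.
by move: Hc; rewrite shiftm1 tcompNr compm1 tcompNl => /oppr_inj ->.
Qed.

Lemma distL2 (D : TriCat) (X Y Z W : D) (f : Mor X Y) (g : Mor Y Z)
  (h : Mor Z (shift X)) (u : Mor Y W) :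
  dist f g h -> tcomp u f = 0 -> exists v, tcomp v g = u.
Proof.
move=> H Hu.
have [W' [i [j [ij ji]]]] := shift_esurj W.
have H1 := dist_rot (dist_rot (dist_id W')).
have [|c [Hc _]] := dist_morph H H1 (a := 0 : Mor X (zobj D)) (b := tcomp j u).
  by rewrite -tcompA Hu !tcomp0r.
exists (tcomp i (-c)).
rewrite -tcompA tcompNl Hc shiftm1 tcompNl comp1m opprK tcompA ij.
by rewrite comp1m.
Qed.

Lemma dist_shiftn (D : TriCat) (X Y Z : D) (f : Mor X Y) (g : Mor Y Z)
  (h : Mor Z (shift X)) n :
  dist f g h -> exists (f' : Mor (shiftn n X) (shiftn n Y))
     (g' : Mor (shiftn n Y) (shiftn n Z))
     (h' : Mor (shiftn n Z) (shift (shiftn n X))), dist f' g' h'.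
Proof.
move=> H; elim: n => [|n [f' [g' [h' H']]]]; first by exists f, g, h.
exists (- shiftm f'), (- shiftm g'), (- shiftm h').
exact: dist_rot (dist_rot (dist_rot H')).
Qed.

Definition Zm (D : TriCat) (A B : D) := forall f : Mor A B, f = 0.

Lemma E1 (D : TriCat) (X Y Z W : D) (f : Mor X Y) (g : Mor Y Z)
  (h : Mor Z (shift X)) :
  dist f g h -> Zm W X -> Zm W Z -> Zm W Y.
Proof.
move=> H hX hZ u. have [v <-] := distL1 (u := u) H (hZ _).
by rewrite (hX v) tcomp0r.
Qed.

Lemma E2 (D : TriCat) (X Y Z W : D) (f : Mor X Y) (g : Mor Y Z)
  (h : Mor Z (shift X)) :
  dist f g h -> Zm X W -> Zm Z W -> Zm Y W.
Proof.
move=> H hX hZ u. have [v <-] := distL2 (u := u) H (hX _).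
by rewrite (hZ v) tcomp0l.
Qed.

Theorem proposition2p1 (D : TriCat) (hcop : has_small_coproducts D)
  (T1 T2 : D) (hT1 : exceptional T1) (hT2 : exceptional T2)
  (A1 : forall k : int, homZ_vanishes T1 T2 k)
  (A2 : forall k : int, k != 0 -> k != 1 -> homZ_vanishes T2 T1 k)
  (alpha : Mor T2 (shift T1)) (T : D) (beta : Mor T1 T) (gamma : Mor T T2)
  (htri : dist beta gamma alpha) :
  exceptional T <->
  (forall phi : Mor T2 (shift T1), exists (f : Mor T2 T2) (g : Mor T1 T1),
      tcomp alpha f + tcomp (shiftm g) alpha = phi).
Proof.
have rot1 := dist_rot htri.
have rot2 := dist_rot rot1.
have rot3 := dist_rot rot2.
split.
- move=> hT phi.
  have hTT : Zm T (shift T) := hT 1 isT.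
  have [v Hv] := distL2 (u := tcomp (- shiftm beta) phi) rot1 (hTT _).
  have [v0 Ev] := shiftm_surj v. subst v.
  have [g Hg] := distL1 (u := v0) htri (A1 0 _).
  have [|f Hf] := distL1 (u := phi + tcomp (shiftm g) alpha) rot2.
    by rewrite compDr -Hv -Hg shiftmM tcompNl tcompA subrr.
  exists f, (-g).
  by rewrite Hf shiftmN tcompNl addrK.
- move=> hsurj k hk. case: k hk => [[|[|n]]|n] hk.
  + by [].
  + change (Zm T (shift T)) => u.
    have hTb : Zm T1 (shift T) := E1 rot3 (hT1 1 isT) (A1 1).
    have [w Hw] := distL2 (u := u) htri (hTb _).
    have [phi Hphi] := distL1 (u := w) rot3 (hT2 1 isT _).
    have [f [g Hfg]] := hsurj phi.
    have e1 : tcomp (-shiftm beta) alpha = 0 := dist_comp0 rot2.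
    have e2 : tcomp alpha gamma = 0 := dist_comp0 rot1.
    rewrite -Hw -Hphi -Hfg compDr compDl (tcompA (-shiftm beta) alpha f) e1.
    rewrite !tcomp0l add0r -tcompA -tcompA e2 !tcomp0r //.
  + change (Zm T (shiftn n.+2 T)).
    have [f' [g' [h' Hs]]] := dist_shiftn n.+2 htri.
    apply: (E2 htri).
    * exact: E1 Hs (hT1 n.+2 isT) (A1 n.+2).
    * exact: E1 Hs (A2 n.+2 isT isT) (hT2 n.+2 isT).
  + change (Zm (shiftn n.+1 T) T).
    have [f' [g' [h' Hs]]] := dist_shiftn n.+1 htri.
    apply: (E2 Hs).
    * exact: E1 htri (hT1 (Negz n) isT) (A1 (Negz n)).
    * exact: E1 htri (A2 (Negz n) isT isT) (hT2 (Negz n) isT).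
Qed.
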